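(* For every $V>0$ and every $x=(x_1,x_2,x_3)\in\Omega_V$, at least one coordinate satisfies $|x_i|<1$.
   Context: $f(x,y,z)=(2xy-z,x,y)$ on $\mathbb{R}^3$; $I(x,y,z)=x^2+y^2+z^2-2xyz-1$; $S_V=\{I=V\}$; for $V>0$, $\Omega_V=\{p\in S_V:\{f^n(p)\}_{n\in\mathbb{Z}}\text{ is bounded}\}$. *)

(* Defs.v *)
From Stdlib Require Import Reals ZArith.
Open Scope R_scope.

Definition pt : Type := (R * R * R)%type.

Definition f (p : pt) : pt :=
  let '(x, y, z) := p in (2 * x * y - z, x, y).

Definition finv (p : pt) : pt :=
  let '(x, y, z) := p in (y, z, 2 * y * z - x).

Definition fiter (n : Z) (p : pt) : pt :=
  match n with
  | Z0 => p
  | Zpos k => Nat.iter (Pos.to_nat k) f p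
  | Zneg k => Nat.iter (Pos.to_nat k) finv p
  end.

Definition I (p : pt) : R :=
  let '(x, y, z) := p in x ^ 2 + y ^ 2 + z ^ 2 - 2 * x * y * z - 1.

Definition coord1 (p : pt) : R := fst (fst p).
Definition coord2 (p : pt) : R := snd (fst p).
Definition coord3 (p : pt) : R := snd p.

Definition bounded_orbit (p : pt) : Prop :=
  exists M : R, forall n : Z,
    Rabs (coord1 (fiter n p)) <= M /\
    Rabs (coord2 (fiter n p)) <= M /\
    Rabs (coord3 (fiter n p)) <= M.

Definition Omega (V : R) (p : pt) : Prop := I p = V /\ bounded_orbit p.

(* Main.v *)
Require Import Defs.
From Stdlib Require Import Reals ZArith.
From Stdlib Require Import Lra Psatz.
Open Scope R_scope.
Local Notation f := Defs.f.
Local Notation finv := Defs.finv.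

Definition InvT (p : pt) : Prop :=
  let '(x, y, z) := p in
  0 < x * y * z /\ Rabs z <= Rabs x /\ 1 <= Rabs x /\ 1 <= Rabs y /\ 1 <= Rabs z.

Definition Dq (p : pt) : R := Rabs (coord1 p) - Rabs (coord3 p).

Lemma step (x y z : R) : InvT (x, y, z) ->
  Rabs (2 * x * y - z) = 2 * Rabs x * Rabs y - Rabs z /\ InvT (2 * x * y - z, x, y).
Proof.
  intros [H0 [H1 [H2 [H3 H4]]]].
  set (a := Rabs x) in *. set (b := Rabs y) in *. set (c := Rabs z) in *.
  assert (hxyz : x * y * z = a * b * c).
  { unfold a, b, c. rewrite <- !Rabs_mult. rewrite Rabs_pos_eq; lra. }
  assert (hz2 : z * z = c * c).
  { unfold c. rewrite <- Rabs_mult. rewrite Rabs_pos_eq; nra. }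
  assert (hp : z * (2 * x * y - z) = c * (2 * a * b - c)).
  { replace (z * (2 * x * y - z)) with (2 * (x * y * z) - z * z) by ring.
    rewrite hxyz, hz2. ring. }
  assert (hpos : 2 * a * b - c >= b) by nra.
  assert (habs : Rabs (2 * x * y - z) = 2 * a * b - c).
  { apply Rmult_eq_reg_r with c; [| lra].
    unfold c at 1. rewrite <- Rabs_mult. rewrite Rmult_comm, hp.
    rewrite Rabs_pos_eq; nra. }
  split; [exact habs|].
  unfold InvT. rewrite habs. fold a b.
  repeat split; try lra.
  assert (Hq : (2 * x * y - z) * x * y * (z * z) = c * (2 * a * b - c) * (a * b * c)).
  { rewrite <- hp, <- hxyz. ring. }
  assert (0 < z * z) by nra.
  assert (0 < c * (2 * a * b - c) * (a * b * c)).
  { apply Rmult_lt_0_compat; [nra|]. rewrite <- hxyz; lra. }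
  nra.
Qed.

Lemma iterf (q : pt) : InvT q -> forall n : nat,
  InvT (Nat.iter n f q) /\
  Rabs (coord1 (Nat.iter n f q)) >= Rabs (coord1 q) + INR n * Dq q /\
  Dq (Nat.iter n f q) >= Dq q.
Proof.
  intros Hq n. induction n as [|n [Hi [Hc Hd]]].
  - simpl. split; [exact Hq|]. lra.
  - rewrite S_INR. simpl Nat.iter.
    destruct (Nat.iter n f q) as [[x y] z] eqn:E.
    simpl. destruct (step x y z Hi) as [Ha Hi'].
    split; [exact Hi'|].
    unfold Dq, coord1, coord3 in *; simpl in *.
    destruct Hi as [_ [K1 [K2 [K3 K4]]]].
    rewrite Ha. split; nra.
Qed.

Lemma D1pos (x y z : R) : InvT (x, y, z) -> 0 < I (x, y, z) ->
  0 < Dq (f (x, y, z)).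
Proof.
  intros Hi HV. pose proof (step x y z Hi) as [Ha _].
  unfold Dq, coord1, coord3; simpl. rewrite Ha.
  destruct Hi as [H0 [H1 [H2 [H3 H4]]]].
  unfold I in HV.
  set (a := Rabs x) in *. set (b := Rabs y) in *. set (c := Rabs z) in *.
  assert (hxyz : x * y * z = a * b * c).
  { unfold a, b, c. rewrite <- !Rabs_mult. rewrite Rabs_pos_eq; lra. }
  assert (x ^ 2 = a ^ 2) by (unfold a; rewrite pow2_abs; auto).
  assert (y ^ 2 = b ^ 2) by (unfold b; rewrite pow2_abs; auto).
  assert (z ^ 2 = c ^ 2) by (unfold c; rewrite pow2_abs; auto).
  assert (HV' : 0 < a ^ 2 + b ^ 2 + c ^ 2 - 2 * a * b * c - 1).
  { replace (2 * a * b * c) with (2 * (x * y * z)) by (rewrite hxyz; ring).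
    rewrite <- H, <- H5, <- H6. lra. }
  destruct (Rle_lt_dec c a) as [_|]; [|lra].
  destruct (Req_dec c a) as [E|E].
  - subst. rewrite E in HV'.
    assert (0 < (b - 1) * (b + 1 - 2 * a ^ 2)) by nra.
    assert (b > 1) by nra. nra.
  - nra.
Qed.

Lemma unbounded (q : pt) : InvT q -> 0 < I q -> forall M : R,
  exists n : nat, M < Rabs (coord1 (Nat.iter n f (f q))).
Proof.
  intros Hq HV M. destruct q as [[x y] z].
  pose proof (D1pos x y z Hq HV) as Hd.
  assert (Hq1 : InvT (f (x, y, z))) by (simpl; apply (step x y z Hq)).
  destruct (INR_archimed (Dq (f (x,y,z))) M) as [n Hn]; [lra|].
  exists n. destruct (iterf _ Hq1 n) as [_ [Hc _]].
  pose proof (Rabs_pos (coord1 (f (x, y, z)))). lra.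
Qed.

Definition rev (p : pt) : pt := let '(x, y, z) := p in (z, y, x).

Lemma iter_finv (n : nat) (q : pt) : Nat.iter n finv q = rev (Nat.iter n f (rev q)).
Proof.
  induction n as [|n IH].
  - destruct q as [[x y] z]; reflexivity.
  - simpl. rewrite IH. destruct (Nat.iter n f (rev q)) as [[x y] z].
    simpl. f_equal. ring.
Qed.

Lemma fiter_pos (n : nat) (p : pt) :
  fiter (Zpos (Pos.of_succ_nat n)) p = Nat.iter n f (f p).
Proof. simpl. rewrite SuccNat2Pos.id_succ. apply Nat.iter_succ_r. Qed.

Lemma fiter_neg (n : nat) (p : pt) :
  fiter (Zneg (Pos.of_succ_nat n)) p = rev (Nat.iter n f (f (rev p))).
Proof. simpl. rewrite SuccNat2Pos.id_succ, iter_finv. rewrite Nat.iter_succ_r. reflexivity. Qed.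

Theorem lemma5p18 :
  forall (V x1 x2 x3 : R), 0 < V -> Omega V (x1, x2, x3) ->
    Rabs x1 < 1 \/ Rabs x2 < 1 \/ Rabs x3 < 1.
Proof.
  intros V x y z HV [HI [M HM]].
  destruct (Rlt_le_dec (Rabs x) 1) as [|h1]; [left; auto|].
  destruct (Rlt_le_dec (Rabs y) 1) as [|h2]; [right; left; auto|].
  destruct (Rlt_le_dec (Rabs z) 1) as [|h3]; [right; right; auto|].
  exfalso.
  assert (Hx0 : x <> 0) by (intro E; rewrite E, Rabs_R0 in h1; lra).
  assert (Hy0 : y <> 0) by (intro E; rewrite E, Rabs_R0 in h2; lra).
  assert (Hz0 : z <> 0) by (intro E; rewrite E, Rabs_R0 in h3; lra).
  assert (Hp0 : x * y * z <> 0).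
  { repeat apply Rmult_integral_contrapositive_currified; auto. }
  destruct (Rlt_le_dec 0 (x * y * z)) as [Hpos|Hneg].
  - destruct (Rle_lt_dec (Rabs z) (Rabs x)) as [Hzx|Hxz].
    +
      assert (Hi : InvT (x, y, z)) by (repeat split; auto).
      destruct (unbounded _ Hi ltac:(lra) M) as [n Hn].
      destruct (HM (Zpos (Pos.of_succ_nat n))) as [K _].
      rewrite fiter_pos in K. lra.
    +
      assert (Hi : InvT (z, y, x)).
      { repeat split; try lra. }
      assert (HI' : 0 < I (z, y, x)).
      { unfold I in *. replace (2 * z * y * x) with (2 * x * y * z) by ring. lra. }
      destruct (unbounded _ Hi HI' M) as [n Hn].
      destruct (HM (Zneg (Pos.of_succ_nat n))) as [_ [_ K]].
      rewrite fiter_neg in K. simpl rev at 2 in K.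
      destruct (Nat.iter n f (f (z, y, x))) as [[a b] c].
      simpl in K, Hn. unfold coord3 in K. unfold coord1 in Hn. simpl in K, Hn. lra.
  - assert (Hneg' : x * y * z < 0) by lra.
    assert (Hi : InvT (f (x, y, z))).
    { simpl.
      assert (E : Rabs (2 * x * y - z) = 2 * Rabs x * Rabs y + Rabs z).
      { assert (hxyz : x * y * z = - (Rabs x * Rabs y * Rabs z)).
        { rewrite <- !Rabs_mult. rewrite Rabs_left; lra. }
        assert (hz2 : z * z = Rabs z * Rabs z).
        { rewrite <- Rabs_mult. rewrite Rabs_pos_eq; nra. }
        apply Rmult_eq_reg_r with (Rabs z); [| lra].
        rewrite <- Rabs_mult.
        replace ((2 * x * y - z) * z) with (2 * (x * y * z) - z * z) by ring.
        rewrite hxyz, hz2. rewrite Rabs_left; nra. }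
      rewrite E. repeat split; try nra. }
    assert (HI' : 0 < I (f (x, y, z))).
    { unfold I in *; simpl. ring_simplify. ring_simplify in HI. lra. }
    destruct (unbounded _ Hi HI' M) as [n Hn].
    destruct (HM (Zpos (Pos.of_succ_nat (S n)))) as [K _].
    rewrite fiter_pos, Nat.iter_succ_r in K. lra.
Qed.
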